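(* Consider two channels $I$ and $J$ with the same finite state set $\mathcal{H}$ and pmfs $p^I_{\mathcal{H}}$, $p^J_{\mathcal{H}}$, and let $h^I\sim p^I_{\mathcal{H}}$, $h^J\sim p^J_{\mathcal{H}}$. Assume $C_u$ is non-increasing in $h$. If $h^I$ first-order stochastically dominates $h^J$, i.e. $\mathbb{E}[f(h^I)]\ge\mathbb{E}[f(h^J)]$ for every non-decreasing $f:\mathcal{H}\to\mathbb{R}$, then $\bar A_r^{I*}\le\bar A_r^{J*}$, where $\bar A_r^{I*}$ and $\bar A_r^{J*}$ denote the optimal values of the constrained problem (with the same $C_s$, $C_u$, $\hat A_l$, $\hat A_r$ and $C^{\max}$) under channels $I$ and $J$ respectively.
   Context: Single IoT device model. Fix integers $\hat A_l,\hat A_r\ge1$; AoI states $\mathbf{A}=(A_l,A_r)\in\{1,\dots,\hat A_l\}\times\{1,\dots,\hat A_r\}$. Channel states lie in a finite set $\mathcal{H}\subset(0,\infty)$ and are i.i.d. across time slots with a given pmf. Actions $\mathbf{w}=(s,u)\in\{0,1\}^2$ with energy cost $C(\mathbf{w},h)=sC_s+uC_u(h)$, $C_s\ge0$, $C_u:\mathcal{H}\to[0,\infty)$. AoI dynamics under $\mathbf{w}=(s,u)$: $A_l(t+1)=1$ if $s=1$, else $\min\{A_l(t)+1,\hat A_l\}$; $A_r(t+1)=\min\{A_l(t)+1,\hat A_r\}$ if $u=1$, else $\min\{A_r(t)+1,\hat A_r\}$. A stationary policy $\pi$ selects (possibly randomly) an action as a function of the current $(\mathbf{A}(t),h(t))$;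 for stationary unichain $\pi$, $\bar A_r(\pi)=\limsup_{T\to\infty}\frac1T\sum_{t=1}^T\mathbb{E}[A_r(t)]$ and $\bar C(\pi)=\limsup_{T\to\infty}\frac1T\sum_{t=1}^T\mathbb{E}[C(\mathbf{w}(t),h(t))]$. Given $C^{\max}>0$ (assumed such that the problem is feasible), the constrained problem is $\bar A_r^*=\min_\pi\{\bar A_r(\pi):\bar C(\pi)\le C^{\max}\}$ over stationary unichain policies. *)

(* Defs.v *)
From Stdlib Require Import Reals Lra Lia List Arith.
Import ListNotations.
Open Scope R_scope.

Definition sumL {A : Type} (l : list A) (f : A -> R) : R :=
  fold_right (fun x acc => f x + acc) 0 l.

(* state of the controlled chain: (A_l, A_r, h) *)
Definition st : Type := (nat * nat * R)%type.

(* actions w = (s, u) *)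
Definition actions : list (bool * bool) :=
  [(false, false); (false, true); (true, false); (true, true)].

(* stationary randomized policy: probability of action w in state (A_l,A_r,h) *)
Definition Policy : Type := nat -> nat -> R -> bool * bool -> R.

Definition states (Alh Arh : nat) (hs : list R) : list st :=
  flat_map (fun al => flat_map (fun ar => map (fun h => (al, ar, h)) hs)
                                (seq 1 Arh)) (seq 1 Alh).

Definition next (Alh Arh : nat) (al ar : nat) (w : bool * bool) : nat * nat :=
  ((if fst w then 1%nat else Nat.min (al + 1) Alh),
   (if snd w then Nat.min (al + 1) Arh else Nat.min (ar + 1) Arh)).

Definition cost (Cs : R) (Cu : R -> R) (w : bool * bool) (h : R) : R :=
  (if fst w then Cs else 0) + (if snd w then Cu h else 0).

Definition valid_policy (Alh Arh : nat) (hs : list R) (pi : Policy) : Prop :=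
  forall al ar h, (1 <= al <= Alh)%nat -> (1 <= ar <= Arh)%nat -> In h hs ->
    (forall w, 0 <= pi al ar h w) /\ sumL actions (pi al ar h) = 1.

Definition trans (Alh Arh : nat) (p : R -> R) (pi : Policy) (s s' : st) : R :=
  let '(al, ar, h) := s in
  let '(al', ar', h') := s' in
  p h' * sumL actions (fun w =>
    let a := next Alh Arh al ar w in
    if andb (Nat.eqb (fst a) al') (Nat.eqb (snd a) ar') then pi al ar h w else 0).

(* distribution of the state at time slot n+1, starting from AoI (a0l,a0r), h(1) ~ p *)
Fixpoint dist (Alh Arh : nat) (hs : list R) (p : R -> R) (pi : Policy)
    (a0l a0r : nat) (n : nat) (s : st) : R :=
  match n with
  | O => let '(al, ar, h) := s in
         if andb (Nat.eqb al a0l) (Nat.eqb ar a0r) then p h else 0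
  | S m => sumL (states Alh Arh hs)
             (fun s0 => dist Alh Arh hs p pi a0l a0r m s0 * trans Alh Arh p pi s0 s)
  end.

(* E[A_r(n+1)] *)
Definition EAr Alh Arh hs p pi a0l a0r (n : nat) : R :=
  sumL (states Alh Arh hs) (fun s =>
    let '(al, ar, h) := s in dist Alh Arh hs p pi a0l a0r n s * INR ar).

(* E[C(w(n+1), h(n+1))] *)
Definition ECost Alh Arh hs p pi a0l a0r Cs Cu (n : nat) : R :=
  sumL (states Alh Arh hs) (fun s =>
    let '(al, ar, h) := s in
    dist Alh Arh hs p pi a0l a0r n s *
      sumL actions (fun w => pi al ar h w * cost Cs Cu w h)).

Definition cesaro (u : nat -> R) (T : nat) : R := sumL (seq 0 T) u / INR T.

Definition is_limsup (u : nat -> R) (l : R) : Prop :=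
  forall eps, eps > 0 ->
    (exists N, forall n, (n >= N)%nat -> u n <= l + eps) /\
    (forall N, exists n, (n >= N)%nat /\ l - eps <= u n).

Inductive reach (Alh Arh : nat) (hs : list R) (p : R -> R) (pi : Policy) : st -> st -> Prop :=
| reach_refl : forall s, reach Alh Arh hs p pi s s
| reach_step : forall s s' s'', In s' (states Alh Arh hs) ->
    trans Alh Arh p pi s s' > 0 -> reach Alh Arh hs p pi s' s'' ->
    reach Alh Arh hs p pi s s''.

Definition recurrent Alh Arh hs p pi (s : st) : Prop :=
  forall s', reach Alh Arh hs p pi s s' -> reach Alh Arh hs p pi s' s.

Definition unichain Alh Arh hs p pi : Prop :=
  forall s1 s2, In s1 (states Alh Arh hs) -> In s2 (states Alh Arh hs) ->
    recurrent Alh Arh hs p pi s1 -> recurrent Alh Arh hs p pi s2 ->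
    reach Alh Arh hs p pi s1 s2.

Definition feasible_values Alh Arh hs p Cs Cu Cmax a0l a0r (a : R) : Prop :=
  exists pi : Policy,
    valid_policy Alh Arh hs pi /\ unichain Alh Arh hs p pi /\
    (exists c, is_limsup (cesaro (ECost Alh Arh hs p pi a0l a0r Cs Cu)) c /\ c <= Cmax) /\
    is_limsup (cesaro (EAr Alh Arh hs p pi a0l a0r)) a.

Definition is_glb (E : R -> Prop) (m : R) : Prop :=
  (forall x, E x -> m <= x) /\ (forall b, (forall x, E x -> b <= x) -> b <= m).

Definition is_pmf (hs : list R) (p : R -> R) : Prop :=
  (forall h, In h hs -> 0 <= p h) /\ sumL hs p = 1.

Definition expect (hs : list R) (p : R -> R) (f : R -> R) : R :=
  sumL hs (fun h => p h * f h).

(* Main.v *)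
Require Import Defs.
From Stdlib Require Import Reals List.
From Stdlib Require Import Lra Lia Arith Classical.
From Coquelicot Require Lim_seq Rbar.
Import ListNotations.
Open Scope R_scope.


Lemma sumL_nil {A} (f : A -> R) : sumL [] f = 0.
Proof. reflexivity. Qed.
Lemma sumL_cons {A} (x : A) l f : sumL (x :: l) f = f x + sumL l f.
Proof. reflexivity. Qed.
Lemma sumL_app {A} (l1 l2 : list A) f : sumL (l1 ++ l2) f = sumL l1 f + sumL l2 f.
Proof. induction l1; simpl; [lra|]. unfold sumL in *; simpl. rewrite IHl1; lra. Qed.
Lemma sumL_flat_map {A B} (g : A -> list B) l f :
  sumL (flat_map g l) f = sumL l (fun x => sumL (g x) f).
Proof. induction l; simpl; [reflexivity|]. rewrite sumL_app, IHl. reflexivity. Qed.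
Lemma sumL_map {A B} (g : A -> B) l f : sumL (map g l) f = sumL l (fun x => f (g x)).
Proof. induction l; simpl; [reflexivity|]. unfold sumL in *; simpl. rewrite IHl. reflexivity. Qed.
Lemma sumL_ext {A} (l : list A) f g : (forall x, In x l -> f x = g x) -> sumL l f = sumL l g.
Proof. induction l; intros H; simpl; [reflexivity|]. unfold sumL in *; simpl.
  rewrite H by (left; auto). rewrite IHl; auto. intros; apply H; right; auto. Qed.
Lemma sumL_le {A} (l : list A) f g : (forall x, In x l -> f x <= g x) -> sumL l f <= sumL l g.
Proof. induction l; intros H; simpl; [lra|]. unfold sumL in *; simpl.
  assert (f a <= g a) by (apply H; left; auto).
  assert (fold_right (fun x acc => f x + acc) 0 l <= fold_right (fun x acc => g x + acc) 0 l)
   by (apply IHl; intros; apply H; right; auto). lra. Qed.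
Lemma sumL_plus {A} (l : list A) f g : sumL l (fun x => f x + g x) = sumL l f + sumL l g.
Proof. induction l; simpl; [lra|]. unfold sumL in *; simpl. rewrite IHl; lra. Qed.
Lemma sumL_scal {A} (l : list A) c f : sumL l (fun x => c * f x) = c * sumL l f.
Proof. induction l; simpl; [lra|]. unfold sumL in *; simpl. rewrite IHl; lra. Qed.
Lemma sumL_scal_r {A} (l : list A) c f : sumL l (fun x => f x * c) = sumL l f * c.
Proof. induction l; simpl; [lra|]. unfold sumL in *; simpl. rewrite IHl; lra. Qed.
Lemma sumL_zero {A} (l : list A) : sumL l (fun _ => 0) = 0.
Proof. induction l; simpl; [lra|]. unfold sumL in *; simpl. rewrite IHl; lra. Qed.
Lemma sumL_swap {A B} (l1 : list A) (l2 : list B) F :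
  sumL l1 (fun x => sumL l2 (F x)) = sumL l2 (fun y => sumL l1 (fun x => F x y)).
Proof. induction l1; simpl.
  - symmetry. apply (sumL_zero l2).
  - change (sumL l2 (F a) + sumL l1 (fun x => sumL l2 (F x)) =
       sumL l2 (fun y => F a y + sumL l1 (fun x => F x y))).
    rewrite sumL_plus, IHl1. reflexivity. Qed.
Lemma sumL_nonneg {A} (l : list A) f : (forall x, In x l -> 0 <= f x) -> 0 <= sumL l f.
Proof. intros H. rewrite <- (sumL_zero l). apply sumL_le. auto. Qed.
Lemma sumL_pos_ex {A} (l : list A) f : 0 < sumL l f -> exists x, In x l /\ 0 < f x.
Proof. intros H. apply NNPP; intros C.
  assert (sumL l f <= sumL l (fun _ => 0)).
  { apply sumL_le. intros x Hx. apply Rnot_lt_le. intros Hc; apply C; eauto. }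
  rewrite sumL_zero in H0; lra. Qed.
Lemma sumL_nonneg_le_term {A} (l : list A) f x : (forall y, In y l -> 0 <= f y) -> In x l -> f x <= sumL l f.
Proof. induction l; intros H Hx; simpl in *; [contradiction|]. unfold sumL in *; simpl.
  destruct Hx as [<-|Hx].
  - assert (0 <= fold_right (fun x0 acc => f x0 + acc) 0 l).
    { apply (sumL_nonneg l f). intros; apply H; auto. } lra.
  - assert (f x <= fold_right (fun x0 acc => f x0 + acc) 0 l) by (apply IHl; auto).
    assert (0 <= f a) by auto. lra. Qed.

Lemma sumL_states Alh Arh hs F :
  sumL (states Alh Arh hs) F =
  sumL (seq 1 Alh) (fun al => sumL (seq 1 Arh) (fun ar => sumL hs (fun h => F (al, ar, h)))).
Proof. unfold states. rewrite sumL_flat_map. apply sumL_ext; intros.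
  rewrite sumL_flat_map. apply sumL_ext; intros. rewrite sumL_map. reflexivity. Qed.

Lemma In_states Alh Arh hs al ar h :
  In (al, ar, h) (states Alh Arh hs) <-> ((1 <= al <= Alh)%nat /\ (1 <= ar <= Arh)%nat /\ In h hs).
Proof. unfold states. rewrite in_flat_map. split.
  - intros [x [Hx H]]. rewrite in_flat_map in H. destruct H as [y [Hy H]].
    rewrite in_map_iff in H. destruct H as [z [E Hz]]. inversion E; subst.
    apply in_seq in Hx, Hy. repeat split; auto; lia.
  - intros (H1 & H2 & H3). exists al; split; [apply in_seq; lia|].
    apply in_flat_map. exists ar; split; [apply in_seq; lia|]. apply in_map_iff. eauto. Qed.


Definition qf (hs : list R) (p : R -> R) (pi : Policy) al ar w := sumL hs (fun h => p h * pi al ar h w).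
Definition indw Alh Arh al ar al' ar' w : bool :=
  andb (Nat.eqb (fst (next Alh Arh al ar w)) al') (Nat.eqb (snd (next Alh Arh al ar w)) ar').

Lemma trans_eq Alh Arh p pi al0 ar0 h0 al ar h :
  trans Alh Arh p pi (al0, ar0, h0) (al, ar, h) =
  p h * sumL actions (fun w => if indw Alh Arh al0 ar0 al ar w then pi al0 ar0 h0 w else 0).
Proof. reflexivity. Qed.

Fixpoint mu Alh Arh a0l a0r (Q : nat -> nat -> bool * bool -> R) (n : nat) (al' ar' : nat) : R :=
  match n with
  | O => if andb (Nat.eqb al' a0l) (Nat.eqb ar' a0r) then 1 else 0
  | S m => sumL (seq 1 Alh) (fun al => sumL (seq 1 Arh) (fun ar =>
       mu Alh Arh a0l a0r Q m al ar *
       sumL actions (fun w => if indw Alh Arh al ar al' ar' w then Q al ar w else 0)))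
  end.

Lemma dist_fact Alh Arh hs p pi a0l a0r n al ar h :
  Defs.dist Alh Arh hs p pi a0l a0r n (al, ar, h) = mu Alh Arh a0l a0r (qf hs p pi) n al ar * p h.
Proof.
  revert al ar h. induction n; intros al ar h.
  - simpl. destruct (andb _ _); lra.
  - simpl Defs.dist. rewrite sumL_states. cbn [mu]. rewrite <- sumL_scal_r. apply sumL_ext; intros al0 _.
    rewrite <- sumL_scal_r. apply sumL_ext; intros ar0 _.
    transitivity (mu Alh Arh a0l a0r (qf hs p pi) n al0 ar0 * p h *
       sumL hs (fun h0 => p h0 * sumL actions (fun w => if indw Alh Arh al0 ar0 al ar w then pi al0 ar0 h0 w else 0))).
    + rewrite <- sumL_scal. apply sumL_ext; intros h0 _. rewrite IHn, trans_eq. ring.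
    + rewrite Rmult_assoc, (Rmult_comm (p h)), <- Rmult_assoc. f_equal. f_equal.
      transitivity (sumL hs (fun h0 => sumL actions (fun w => p h0 *
         (if indw Alh Arh al0 ar0 al ar w then pi al0 ar0 h0 w else 0)))).
      { apply sumL_ext; intros. rewrite sumL_scal. reflexivity. }
      rewrite sumL_swap. apply sumL_ext; intros w _. unfold qf.
      destruct (indw _ _ _ _ _ _ w).
      * reflexivity.
      * transitivity (sumL hs (fun _ => 0)); [apply sumL_ext; intros; ring | apply sumL_zero].
Qed.

Lemma mu_ext Alh Arh a0l a0r Q1 Q2 n al ar :
  (forall al ar w, Q1 al ar w = Q2 al ar w) ->
  mu Alh Arh a0l a0r Q1 n al ar = mu Alh Arh a0l a0r Q2 n al ar.
Proof. intros H. revert al ar; induction n; intros; cbn [mu]; auto.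
  apply sumL_ext; intros. apply sumL_ext; intros. rewrite IHn. f_equal.
  apply sumL_ext; intros. rewrite H. reflexivity. Qed.

Lemma mu_nonneg Alh Arh a0l a0r Q n al ar :
  (forall al ar w, (1 <= al <= Alh)%nat -> (1 <= ar <= Arh)%nat -> 0 <= Q al ar w) ->
  0 <= mu Alh Arh a0l a0r Q n al ar.
Proof. intros H. revert al ar; induction n; intros; cbn [mu].
  - destruct andb; lra.
  - apply sumL_nonneg; intros al0 Hal. apply sumL_nonneg; intros ar0 Har.
    apply in_seq in Hal, Har.
    apply Rmult_le_pos; auto. apply sumL_nonneg; intros w _. destruct indw; [apply H; lia | lra].
Qed.

Lemma EAr_fact Alh Arh hs p pi a0l a0r n :
  EAr Alh Arh hs p pi a0l a0r n =
  sumL (seq 1 Alh) (fun al => sumL (seq 1 Arh) (fun ar =>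
     mu Alh Arh a0l a0r (qf hs p pi) n al ar * INR ar * sumL hs p)).
Proof. unfold EAr. rewrite sumL_states. apply sumL_ext; intros. apply sumL_ext; intros.
  rewrite <- sumL_scal. apply sumL_ext; intros. rewrite dist_fact. ring. Qed.

Lemma ECost_fact Alh Arh hs p pi a0l a0r Cs Cu n :
  ECost Alh Arh hs p pi a0l a0r Cs Cu n =
  sumL (seq 1 Alh) (fun al => sumL (seq 1 Arh) (fun ar =>
     mu Alh Arh a0l a0r (qf hs p pi) n al ar *
     sumL hs (fun h => p h * sumL actions (fun w => pi al ar h w * cost Cs Cu w h)))).
Proof. unfold ECost. rewrite sumL_states. apply sumL_ext; intros. apply sumL_ext; intros.
  rewrite <- sumL_scal. apply sumL_ext; intros. rewrite dist_fact. ring. Qed.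


Definition rem (m : R) (L : list R) := remove Req_EM_T m L.

Lemma NoDup_rem m L : NoDup L -> NoDup (rem m L).
Proof. induction L; intros H; simpl; [constructor|]. inversion H; subst.
  destruct (Req_EM_T m a); auto. constructor; auto.
  intros Hin. apply in_remove in Hin. tauto. Qed.

Lemma sumL_remove L m f : NoDup L -> In m L -> sumL L f = f m + sumL (rem m L) f.
Proof. induction L; intros Hn Hm; [contradiction|]. inversion Hn; subst. unfold rem; simpl.
  destruct (Req_EM_T m a) as [E|E].
  - subst. rewrite notin_remove by auto. reflexivity.
  - destruct Hm as [Hm|Hm]; [congruence|]. rewrite sumL_cons.
    change (sumL (a :: remove Req_EM_T m L) f) with (f a + sumL (rem m L) f).
    rewrite IHL; auto. unfold rem. ring. Qed.

Lemma sumL_single L x g : NoDup L -> In x L ->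
  sumL L (fun h => if Req_EM_T h x then g h else 0) = g x.
Proof. intros Hn Hx. rewrite (sumL_remove L x) by auto.
  destruct (Req_EM_T x x); [|congruence].
  rewrite (sumL_ext _ _ (fun _ => 0)). rewrite sumL_zero; ring.
  intros y Hy. unfold rem in Hy. apply in_remove in Hy. destruct (Req_EM_T y x); tauto. Qed.

Lemma max_exists (L : list R) : L <> [] -> exists m, In m L /\ forall x, In x L -> x <= m.
Proof. induction L; intros H; [congruence|]. destruct L as [|b L].
  - exists a. split; [left; auto|]. intros x [->|[]]; lra.
  - destruct IHL as [m [Hm Hx]]; [congruence|].
    destruct (Rle_dec a m).
    + exists m; split; [right; auto|]. intros x [<-|Hx']; auto.
    + exists a; split; [left; auto|]. intros x [<-|Hx']; [lra|]. specialize (Hx x Hx'); lra. Qed.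

Definition rtail (L : list R) (f : R -> R) t := sumL L (fun h => if Rle_dec t h then f h else 0).

Lemma coupling : forall n L, (length L <= n)%nat -> NoDup L -> forall a b,
 (forall h, In h L -> 0 <= a h) -> (forall h, In h L -> 0 <= b h) ->
 sumL L a = sumL L b -> (forall t, rtail L b t <= rtail L a t) ->
 exists K : R -> R -> R,
  (forall h h', In h L -> In h' L -> 0 <= K h h') /\
  (forall h, In h L -> sumL L (K h) = 1) /\
  (forall h', In h' L -> sumL L (fun h => a h * K h h') = b h') /\
  (forall h h', In h L -> In h' L -> 0 < a h -> 0 < K h h' -> h' <= h).
Proof.
  induction n; intros L Hlen Hnd a b Ha Hb Hsum Htail.
  { destruct L; [|simpl in Hlen; lia]. exists (fun _ _ => 0). simpl; repeat split; intros; contradiction. }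
  destruct L as [|x0 L0].
  { exists (fun _ _ => 0). simpl; repeat split; intros; contradiction. }
  set (L := x0 :: L0) in *.
  destruct (max_exists L) as [m [Hm Hmax]]; [discriminate|].
  set (L' := rem m L).
  assert (HL'lt : forall x, In x L' -> x < m).
  { intros x Hx. unfold L', rem in Hx. apply in_remove in Hx. destruct Hx as [Hx Hne].
    specialize (Hmax x Hx). lra. }
  assert (HinL : forall x, In x L -> x = m \/ In x L').
  { intros x Hx. destruct (Req_EM_T x m); auto. right. apply in_in_remove; auto. }
  assert (HL'L : forall x, In x L' -> In x L).
  { intros x Hx. unfold L', rem in Hx. apply in_remove in Hx. tauto. }
  assert (Hnd' : NoDup L') by (apply NoDup_rem; auto).
  assert (Hlen' : (length L' <= n)%nat).
  { pose proof (remove_length_lt Req_EM_T L m Hm). fold (rem m L) in H. fold L' in H. lia. }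
  assert (Htl : forall f t, rtail L f t = (if Rle_dec t m then f m else 0) + rtail L' f t).
  { intros f t. unfold rtail. rewrite (sumL_remove L m) by auto. reflexivity. }
  assert (Hbm : b m <= a m).
  { specialize (Htail m). rewrite !Htl in Htail.
    assert (Z : forall f, rtail L' f m = 0).
    { intros f. unfold rtail. rewrite (sumL_ext _ _ (fun _ => 0)); [apply sumL_zero|].
      intros y Hy. specialize (HL'lt y Hy). destruct (Rle_dec m y); lra. }
    rewrite !Z in Htail. destruct (Rle_dec m m); lra. }
  assert (Hsa : sumL L a = a m + sumL L' a) by (apply sumL_remove; auto).
  assert (Hsb : sumL L b = b m + sumL L' b) by (apply sumL_remove; auto).
  assert (Ham : 0 <= a m) by auto.
  assert (Hbm0 : 0 <= b m) by auto.
  set (e := a m - b m).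
  destruct L' as [|y0 L0'] eqn:EL'.
  -
    exists (fun _ _ => 1). repeat split.
    + intros; lra.
    + intros h Hh. rewrite (sumL_remove L m) by auto. fold L'. rewrite EL'. simpl. ring.
    + intros h' Hh'. rewrite (sumL_remove L m) by auto. fold L'. rewrite EL'.
      destruct (HinL h' Hh') as [->|[]]. rewrite sumL_nil in Hsa, Hsb |- *. lra.
    + intros h h' Hh Hh' _ _. destruct (HinL h Hh) as [->|[]]. destruct (HinL h' Hh') as [->|[]]. lra.
  - rewrite <- EL' in *.
    destruct (max_exists L') as [m2 [Hm2 Hmax2]]; [rewrite EL'; discriminate|].
    clear EL'.
    set (a' := fun h => a h + (if Req_EM_T h m2 then e else 0)).
    destruct (IHn L' Hlen' Hnd' a' b) as [K' (HK0 & HK1 & HK2 & HK3)].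
    + intros h Hh. unfold a'. assert (0 <= a h) by auto. destruct Req_EM_T; unfold e; lra.
    + auto.
    + unfold a'. rewrite sumL_plus. rewrite (sumL_single L' m2 (fun _ => e)) by auto. unfold e; lra.
    + intros t. unfold rtail.
      rewrite (sumL_ext L' (fun h => if Rle_dec t h then a' h else 0) (fun h => (if Rle_dec t h then a h else 0) +
          (if Req_EM_T h m2 then (if Rle_dec t h then e else 0) else 0))).
      2:{ intros h _. unfold a'. destruct (Rle_dec t h); destruct (Req_EM_T h m2); ring. }
      rewrite sumL_plus. rewrite (sumL_single L' m2 (fun h => if Rle_dec t h then e else 0)) by auto.
      specialize (Htail t). rewrite !Htl in Htail. unfold rtail in Htail.
      destruct (Rle_dec t m2) as [Hle|Hle].
      * pose proof (HL'lt m2 Hm2). destruct (Rle_dec t m); [|lra]. unfold e. lra.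
      * apply Rnot_le_lt in Hle. rewrite (sumL_ext L' (fun h => if Rle_dec t h then b h else 0) (fun _ => 0)).
        2:{ intros h Hh. specialize (Hmax2 h Hh). destruct (Rle_dec t h); [lra|reflexivity]. }
        rewrite sumL_zero. assert (0 <= sumL L' (fun h => if Rle_dec t h then a h else 0)).
        { apply sumL_nonneg. intros h Hh. destruct (Rle_dec t h); [apply Ha; auto|lra]. }
        lra.
    + set (K := fun h h' =>
        if Req_EM_T h m then
          (if Req_EM_T h' m then (if Rlt_dec 0 (a m) then b m / a m else 1)
           else (if Rlt_dec 0 (a m) then e / a m * K' m2 h' else 0))
        else (if Req_EM_T h' m then 0 else K' h h')).
      assert (He : 0 <= e) by (unfold e; lra).
      exists K. repeat split.
      * intros h h' Hh Hh'. unfold K.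
        destruct (Req_EM_T h m); destruct (Req_EM_T h' m); destruct (Rlt_dec 0 (a m)); try lra.
        all: try (unfold Rdiv; apply Rmult_le_pos; [lra| left; apply Rinv_0_lt_compat; lra]).
        all: try (apply Rmult_le_pos; [unfold Rdiv; apply Rmult_le_pos; [lra| left; apply Rinv_0_lt_compat; lra]|]).
        all: try apply HK0; auto.
        all: try (destruct (HinL h' Hh') as [?|?]; [congruence|auto]).
        all: try (destruct (HinL h Hh) as [?|?]; [congruence|auto]).
      * intros h Hh. rewrite (sumL_remove L m) by auto. fold L'. unfold K at 1.
        destruct (Req_EM_T h m) as [Ehm|Ehm]; destruct (Req_EM_T m m) as [_|?]; try congruence.
        -- rewrite (sumL_ext L' _ (fun h' => if Rlt_dec 0 (a m) then e / a m * K' m2 h' else 0)).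
           2:{ intros h' Hh'. unfold K. destruct (Req_EM_T h m); [|congruence].
               destruct (Req_EM_T h' m); [specialize (HL'lt h' Hh'); lra|reflexivity]. }
           destruct (Rlt_dec 0 (a m)).
           ++ rewrite sumL_scal. rewrite HK1 by auto. unfold e. field. lra.
           ++ rewrite sumL_zero. ring.
        -- rewrite (sumL_ext L' _ (K' h)).
           2:{ intros h' Hh'. unfold K. destruct (Req_EM_T h m); [congruence|].
               destruct (Req_EM_T h' m); [specialize (HL'lt h' Hh'); lra|reflexivity]. }
           rewrite HK1. ring. destruct (HinL h Hh); [congruence|auto].
      * intros h' Hh'. rewrite (sumL_remove L m) by auto. fold L'.
        destruct (Req_EM_T h' m) as [Eh'|Eh'].
        -- subst h'. rewrite (sumL_ext L' _ (fun _ => 0)).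
           2:{ intros h Hh. unfold K. destruct (Req_EM_T h m); [specialize (HL'lt h Hh); lra|].
               destruct (Req_EM_T m m); [ring|congruence]. }
           rewrite sumL_zero. unfold K. destruct (Req_EM_T m m); [|congruence].
           destruct (Rlt_dec 0 (a m)). field; lra. assert (a m = 0) by lra. lra.
        -- assert (Hh'L : In h' L') by (destruct (HinL h' Hh'); [congruence|auto]).
           assert (Eq1 : a m * K m h' = e * K' m2 h').
           { unfold K. destruct (Req_EM_T m m); [|congruence]. destruct (Req_EM_T h' m); [congruence|].
             destruct (Rlt_dec 0 (a m)). field; lra. assert (a m = 0) by lra. assert (e = 0) by (unfold e; lra).
             rewrite H0, H. ring. }
           rewrite Eq1. rewrite <- (HK2 h' Hh'L). unfold a'.
           rewrite (sumL_ext L' (fun h => a h * K h h') (fun h => a h * K' h h')).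
           2:{ intros h Hh. unfold K. destruct (Req_EM_T h m); [specialize (HL'lt h Hh); lra|].
               destruct (Req_EM_T h' m); [congruence|reflexivity]. }
           rewrite (sumL_ext L' (fun h => (a h + (if Req_EM_T h m2 then e else 0)) * K' h h')
             (fun h => a h * K' h h' + (if Req_EM_T h m2 then e * K' h h' else 0))).
           2:{ intros h _. destruct Req_EM_T; ring. }
           rewrite sumL_plus. rewrite (sumL_single L' m2 (fun h => e * K' h h')) by auto. ring.
      * intros h h' Hh Hh' Hah HK. unfold K in HK.
        destruct (Req_EM_T h m) as [->|Ehm]; [apply Hmax; auto|].
        destruct (Req_EM_T h' m); [lra|].
        assert (In h L') by (destruct (HinL h Hh); [congruence|auto]).
        assert (In h' L') by (destruct (HinL h' Hh'); [congruence|auto]).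
        apply HK3; auto. unfold a'. destruct Req_EM_T; lra.
Qed.


Definition st_dec (x y : st) : {x = y} + {x <> y}.
Proof. decide equality; [apply Req_EM_T|]. decide equality; apply Nat.eq_dec. Defined.

Lemma reach_trans Alh Arh hs p pi s t u :
  reach Alh Arh hs p pi s t -> reach Alh Arh hs p pi t u -> reach Alh Arh hs p pi s u.
Proof. induction 1; intros; auto. eapply reach_step; eauto. Qed.

Lemma reach_in Alh Arh hs p pi s t :
  reach Alh Arh hs p pi s t -> s = t \/ In t (states Alh Arh hs).
Proof. induction 1; auto. destruct IHreach; subst; auto. Qed.

Lemma exists_recurrent_aux Alh Arh hs p pi : forall n (C : list st), (length C <= n)%nat ->
  forall s, In s (states Alh Arh hs) -> (forall t, reach Alh Arh hs p pi s t -> In t C) ->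
  exists r, In r (states Alh Arh hs) /\ reach Alh Arh hs p pi s r /\ recurrent Alh Arh hs p pi r.
Proof.
  induction n; intros C Hl s Hs HC.
  { destruct C; [|simpl in Hl; lia]. exfalso. apply (HC s). constructor. }
  destruct (classic (recurrent Alh Arh hs p pi s)) as [Hr|Hr].
  { exists s; repeat split; auto. constructor. }
  unfold recurrent in Hr. apply not_all_ex_not in Hr. destruct Hr as [s' Hr].
  apply imply_to_and in Hr. destruct Hr as [Hss' Hns].
  assert (Hs' : In s' (states Alh Arh hs)).
  { destruct (reach_in _ _ _ _ _ _ _ Hss') as [<-|]; auto. }
  assert (Hl' : (length (remove st_dec s C) <= n)%nat).
  { assert (In s C) by (apply HC; constructor).
    pose proof (remove_length_lt st_dec C s H). lia. }
  assert (HC' : forall t, reach Alh Arh hs p pi s' t -> In t (remove st_dec s C)).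
  { intros t Ht. apply in_in_remove.
    + intros ->. auto.
    + apply HC. eapply reach_trans; eauto. }
  destruct (IHn _ Hl' s' Hs' HC') as [r (Hr1 & Hr2 & Hr3)].
  exists r; repeat split; auto. eapply reach_trans; eauto.
Qed.

Lemma exists_recurrent Alh Arh hs p pi s : In s (states Alh Arh hs) ->
  exists r, In r (states Alh Arh hs) /\ reach Alh Arh hs p pi s r /\ recurrent Alh Arh hs p pi r.
Proof. intros Hs. apply (exists_recurrent_aux _ _ _ _ _ (length (states Alh Arh hs)) (states Alh Arh hs)); auto.
  intros t Ht. destruct (reach_in _ _ _ _ _ _ _ Ht) as [<-|]; auto. Qed.

Lemma last_step Alh Arh hs p pi s1 t : reach Alh Arh hs p pi s1 t ->
  forall s, trans Alh Arh p pi s s1 > 0 -> exists u, trans Alh Arh p pi u t > 0.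
Proof. induction 1; intros s0 Hs0; eauto. Qed.

Lemma in_actions w : In w actions.
Proof. destruct w as [[|] [|]]; simpl; tauto. Qed.

Lemma next_range Alh Arh al ar w : (1 <= Alh)%nat -> (1 <= Arh)%nat ->
  (1 <= al <= Alh)%nat -> (1 <= ar <= Arh)%nat ->
  (1 <= fst (next Alh Arh al ar w) <= Alh)%nat /\ (1 <= snd (next Alh Arh al ar w) <= Arh)%nat.
Proof. intros. destruct w as [[|] [|]]; simpl; lia. Qed.

Lemma ind_next Alh Arh al ar w :
  indw Alh Arh al ar (fst (next Alh Arh al ar w)) (snd (next Alh Arh al ar w)) w = true.
Proof. unfold indw. rewrite !Nat.eqb_refl. reflexivity. Qed.

Lemma trans_pos_inv Alh Arh hs p pi al ar h al' ar' h' :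
  In h' hs -> (forall x, In x hs -> 0 <= p x) ->
  trans Alh Arh p pi (al, ar, h) (al', ar', h') > 0 ->
  0 < p h' /\ exists w, indw Alh Arh al ar al' ar' w = true /\ 0 < pi al ar h w.
Proof. intros Hh' Hp Ht. rewrite trans_eq in Ht.
  assert (p h' <> 0) by (intros E; rewrite E in Ht; lra).
  assert (0 < p h') by (specialize (Hp h' Hh'); lra). split; auto.
  assert (0 < sumL actions (fun w => if indw Alh Arh al ar al' ar' w then pi al ar h w else 0)).
  { apply (Rmult_lt_reg_l (p h')); auto. lra. }
  apply sumL_pos_ex in H1. destruct H1 as [w [_ Hw]]. exists w.
  destruct (indw _ _ _ _ _ _ w); [auto|lra]. Qed.

Lemma trans_pos Alh Arh p pi al ar h al' ar' h' w :
  (forall w, 0 <= pi al ar h w) ->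
  0 < p h' -> indw Alh Arh al ar al' ar' w = true -> 0 < pi al ar h w ->
  trans Alh Arh p pi (al, ar, h) (al', ar', h') > 0.
Proof. intros Hnn Hp Hi Hw. rewrite trans_eq. apply Rmult_lt_0_compat; auto.
  apply Rlt_le_trans with (if indw Alh Arh al ar al' ar' w then pi al ar h w else 0).
  - rewrite Hi; auto.
  - apply (sumL_nonneg_le_term actions (fun w => if indw Alh Arh al ar al' ar' w then pi al ar h w else 0)).
    + intros y _. destruct (indw Alh Arh al ar al' ar' y); [apply Hnn|lra].
    + apply in_actions. Qed.


Definition piI (hs : list R) (K : R -> R -> R) (piJ : Policy) : Policy :=
  fun al ar h w => sumL hs (fun h' => K h h' * piJ al ar h' w).

Lemma prod_pos_inv a b : 0 <= a -> 0 <= b -> 0 < a * b -> 0 < a /\ 0 < b.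
Proof. intros Ha Hb H. destruct Ha as [Ha|Ha]; destruct Hb as [Hb|Hb]; subst; try lra;
  rewrite ?Rmult_0_r, ?Rmult_0_l in H; lra. Qed.

Lemma valid_I Alh Arh hs K piJ :
  valid_policy Alh Arh hs piJ ->
  (forall h h', In h hs -> In h' hs -> 0 <= K h h') ->
  (forall h, In h hs -> sumL hs (K h) = 1) ->
  valid_policy Alh Arh hs (piI hs K piJ).
Proof. intros Hv HK0 HK1 al ar h Hal Har Hh. split.
  - intros w. unfold piI. apply sumL_nonneg. intros h' Hh'. apply Rmult_le_pos; auto.
    apply (Hv al ar h'); auto.
  - unfold piI. rewrite <- sumL_swap.
    rewrite (sumL_ext hs _ (fun h' => K h h' * 1)).
    + rewrite sumL_scal_r, HK1; auto; ring.
    + intros h' Hh'. rewrite sumL_scal. f_equal. apply (Hv al ar h'); auto. Qed.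

Lemma piI_ge Alh Arh hs K piJ al ar h h' w :
  valid_policy Alh Arh hs piJ ->
  (forall h h', In h hs -> In h' hs -> 0 <= K h h') ->
  (1 <= al <= Alh)%nat -> (1 <= ar <= Arh)%nat -> In h hs -> In h' hs ->
  K h h' * piJ al ar h' w <= piI hs K piJ al ar h w.
Proof. intros Hv HK0 Hal Har Hh Hh'. unfold piI.
  apply (sumL_nonneg_le_term hs (fun h' => K h h' * piJ al ar h' w)); auto.
  intros y Hy. apply Rmult_le_pos; auto. apply (Hv al ar y); auto. Qed.

Lemma sim Alh Arh hs pI pJ piJ K
  (HAl : (1 <= Alh)%nat) (HAr : (1 <= Arh)%nat)
  (HpI : is_pmf hs pI) (HpJ : is_pmf hs pJ) (Hv : valid_policy Alh Arh hs piJ)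
  (HK0 : forall h h', In h hs -> In h' hs -> 0 <= K h h')
  (HK1 : forall h, In h hs -> sumL hs (K h) = 1)
  (HK2 : forall h', In h' hs -> sumL hs (fun h => pI h * K h h') = pJ h') :
  forall s1 t, reach Alh Arh hs pJ piJ s1 t -> forall al ar h' x,
  In (al, ar, h') (states Alh Arh hs) -> In x hs -> 0 < K x h' -> In s1 (states Alh Arh hs) ->
  trans Alh Arh pJ piJ (al, ar, h') s1 > 0 ->
  forall b1 b2 g y, t = (b1, b2, g) -> In y hs -> 0 < pI y -> 0 < K y g ->
  reach Alh Arh hs pI (piI hs K piJ) (al, ar, x) (b1, b2, y).
Proof.
  pose proof (valid_I _ _ _ _ _ Hv HK0 HK1) as HvI.
  induction 1 as [s | s s' s'' Hs' Htr Hr IH];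
    intros al ar h' x Hs Hx HKx Hs1 Ht b1 b2 g y E Hy HpIy HKy.
  - subst s. apply In_states in Hs. apply In_states in Hs1 as Hs1'.
    destruct Hs as (Hal & Har & Hh'). destruct Hs1' as (Hb1 & Hb2 & Hg).
    destruct (trans_pos_inv _ _ _ _ _ _ _ _ _ _ _ Hg (proj1 HpJ) Ht) as [_ [w [Hi Hw]]].
    eapply reach_step with (s' := (b1, b2, y)).
    + apply In_states; auto.
    + apply trans_pos with w; auto.
      * intros w'. apply (HvI al ar x); auto.
      * eapply Rlt_le_trans; [|apply piI_ge with (Alh := Alh) (Arh := Arh) (h' := h'); eauto]. apply Rmult_lt_0_compat; auto.
    + constructor.
  - destruct s as [[c1 c2] h1]. apply In_states in Hs as Hs0. destruct Hs0 as (Hal & Har & Hh').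
    apply In_states in Hs1 as Hs1'. destruct Hs1' as (Hc1 & Hc2 & Hh1).
    destruct (trans_pos_inv _ _ _ _ _ _ _ _ _ _ _ Hh1 (proj1 HpJ) Ht) as [HpJh1 [w [Hi Hw]]].
    rewrite <- (HK2 h1 Hh1) in HpJh1. apply sumL_pos_ex in HpJh1. destruct HpJh1 as [x1 [Hx1 Hp1]].
    apply prod_pos_inv in Hp1; [|apply (proj1 HpI); auto|apply HK0; auto]. destruct Hp1 as [Hp1 Hk1].
    eapply reach_step with (s' := (c1, c2, x1)).
    + apply In_states; auto.
    + apply trans_pos with w; auto.
      * intros w'. apply (HvI al ar x); auto.
      * eapply Rlt_le_trans; [|apply piI_ge with (Alh := Alh) (Arh := Arh) (h' := h'); eauto]. apply Rmult_lt_0_compat; auto.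
    + eapply IH; eauto.
Qed.

Lemma unichain_transfer Alh Arh hs pI pJ piJ K
  (HAl : (1 <= Alh)%nat) (HAr : (1 <= Arh)%nat)
  (HpI : is_pmf hs pI) (HpJ : is_pmf hs pJ) (Hv : valid_policy Alh Arh hs piJ)
  (HK0 : forall h h', In h hs -> In h' hs -> 0 <= K h h')
  (HK1 : forall h, In h hs -> sumL hs (K h) = 1)
  (HK2 : forall h', In h' hs -> sumL hs (fun h => pI h * K h h') = pJ h') :
  unichain Alh Arh hs pJ piJ -> unichain Alh Arh hs pI (piI hs K piJ).
Proof.
  intros HU.
  set (S := states Alh Arh hs) in *.
  destruct (sumL_pos_ex hs pJ) as [g0 [Hg0 Hpg0]]; [rewrite (proj2 HpJ); lra|].
  assert (Hs0 : In (1%nat, 1%nat, g0) S) by (apply In_states; repeat split; auto; lia).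
  destruct (exists_recurrent _ _ _ pJ piJ _ Hs0) as [r (Hr & _ & Hrec)].
  assert (Hall : forall s, In s S -> reach Alh Arh hs pJ piJ s r).
  { intros s Hs. destruct (exists_recurrent _ _ _ pJ piJ _ Hs) as [r' (Hr' & Hsr' & Hrec')].
    eapply reach_trans; [exact Hsr'|]. apply HU; auto. }
  destruct r as [[b1 b2] g]. apply In_states in Hr as Hr'. destruct Hr' as (Hb1 & Hb2 & Hg).
  destruct (sumL_pos_ex actions (piJ b1 b2 g)) as [w [_ Hw]].
  { rewrite (proj2 (Hv b1 b2 g Hb1 Hb2 Hg)). lra. }
  set (s2 := (fst (next Alh Arh b1 b2 w), snd (next Alh Arh b1 b2 w), g0)).
  assert (Hs2 : In s2 S).
  { destruct (next_range Alh Arh b1 b2 w) as [? ?]; auto. apply In_states; auto. }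
  assert (Htr2 : trans Alh Arh pJ piJ (b1, b2, g) s2 > 0).
  { apply trans_pos with w; auto. intros w'. apply (Hv b1 b2 g); auto. apply ind_next. }
  assert (Hs2r : reach Alh Arh hs pJ piJ s2 (b1, b2, g)).
  { apply Hrec. eapply reach_step; eauto. constructor. }
  assert (Hpg : 0 < pJ g).
  { destruct (last_step _ _ _ _ _ _ _ Hs2r _ Htr2) as [[[u1 u2] u3] Hu].
    rewrite trans_eq in Hu. assert (pJ g <> 0) by (intros E; rewrite E in Hu; lra).
    pose proof (proj1 HpJ g Hg). lra. }
  rewrite <- (HK2 g Hg) in Hpg. apply sumL_pos_ex in Hpg. destruct Hpg as [y [Hy Hpy]].
  apply prod_pos_inv in Hpy; [|apply (proj1 HpI); auto|apply HK0; auto]. destruct Hpy as [HpIy HKy].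
  assert (HT : forall s, In s S -> reach Alh Arh hs pI (piI hs K piJ) s (b1, b2, y)).
  { intros [[al ar] x] Hs. apply In_states in Hs as Hs'. destruct Hs' as (Hal & Har & Hx).
    destruct (sumL_pos_ex hs (K x)) as [h' [Hh' HKh']]; [rewrite HK1; auto; lra|].
    assert (Hsh : In (al, ar, h') S) by (apply In_states; auto).
    assert (exists s1, In s1 S /\ trans Alh Arh pJ piJ (al, ar, h') s1 > 0 /\
                        reach Alh Arh hs pJ piJ s1 (b1, b2, g)) as [s1 (Hs1 & Ht1 & Hr1)].
    { pose proof (Hall _ Hsh) as Hre. inversion Hre; subst.
      - exists s2. auto.
      - eauto. }
    eapply (sim Alh Arh hs pI pJ piJ K HAl HAr HpI HpJ Hv HK0 HK1 HK2 s1); eauto. }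
  intros s1 s3 Hs1 Hs3 Hrec1 Hrec3.
  eapply reach_trans; [apply HT; auto|]. apply Hrec3. apply HT; auto.
Qed.


Lemma limsup_le (u v : nat -> R) c : (forall n, 0 <= u n) -> (forall n, u n <= v n) ->
  is_limsup v c -> exists c', is_limsup u c' /\ c' <= c.
Proof.
  intros H0 Huv Hv.
  destruct (Lim_seq.ex_LimSup_seq u) as [l Hl]. destruct l as [l| |].
  - exists l. unfold Lim_seq.is_LimSup_seq in Hl. split.
    + intros eps Heps. destruct (Hl (mkposreal eps Heps)) as [H1 H2]. simpl in H1, H2. split.
      * destruct H2 as [N HN]; exists N; intros n Hn; specialize (HN n Hn); lra.
      * intros N; destruct (H1 N) as [n [Hn Hu]]; exists n; split; [lia|lra].
    + apply Rnot_lt_le; intros Hlt.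
      assert (He : (l - c) / 2 > 0) by lra.
      destruct (Hv _ He) as [[N HN] _].
      destruct (Hl (mkposreal _ He)) as [H1 _]. simpl in H1.
      destruct (H1 N) as [n [Hn Hu]]. specialize (HN n Hn). specialize (Huv n). lra.
  - exfalso. unfold Lim_seq.is_LimSup_seq in Hl.
    destruct (Hv 1) as [[N HN] _]; [lra|].
    destruct (Hl (c + 1) N) as [n [Hn Hu]]. specialize (HN n Hn). specialize (Huv n). lra.
  - exfalso. unfold Lim_seq.is_LimSup_seq in Hl.
    destruct (Hl 0) as [N HN]. specialize (HN N (le_n _)). specialize (H0 N). lra.
Qed.

Lemma is_limsup_ext u v l : (forall n, u n = v n) -> is_limsup u l -> is_limsup v l.
Proof. intros E H eps He. destruct (H eps He) as [[N HN] H2]. split.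
  - exists N; intros n Hn; rewrite <- E; auto.
  - intros N'; destruct (H2 N') as [n [Hn Hu]]; exists n; rewrite <- E; auto. Qed.

Lemma cesaro_le (u v : nat -> R) T : (forall n, u n <= v n) -> cesaro u T <= cesaro v T.
Proof. intros H. unfold cesaro, Rdiv. apply Rmult_le_compat_r.
  - destruct T; [simpl; rewrite Rinv_0; lra|]. left; apply Rinv_0_lt_compat, lt_0_INR; lia.
  - apply sumL_le; auto. Qed.

Lemma cesaro_nonneg (u : nat -> R) T : (forall n, 0 <= u n) -> 0 <= cesaro u T.
Proof. intros H. unfold cesaro, Rdiv. apply Rmult_le_pos.
  - apply sumL_nonneg; auto.
  - destruct T; [simpl; rewrite Rinv_0; lra|]. left; apply Rinv_0_lt_compat, lt_0_INR; lia. Qed.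


Lemma qf_eq hs pI pJ K piJ
  (HK2 : forall h', In h' hs -> sumL hs (fun h => pI h * K h h') = pJ h') al ar w :
  qf hs pI (piI hs K piJ) al ar w = qf hs pJ piJ al ar w.
Proof. unfold qf, piI.
  transitivity (sumL hs (fun h => sumL hs (fun h' => pI h * K h h' * piJ al ar h' w))).
  { apply sumL_ext; intros. rewrite <- sumL_scal. apply sumL_ext; intros. ring. }
  rewrite sumL_swap. apply sumL_ext; intros h' Hh'. rewrite sumL_scal_r, HK2; auto. Qed.

Lemma cost_le hs pI pJ K piJ Cs Cu Alh Arh al ar
  (Hv : valid_policy Alh Arh hs piJ) (HpI : is_pmf hs pI)
  (HK0 : forall h h', In h hs -> In h' hs -> 0 <= K h h')
  (HK2 : forall h', In h' hs -> sumL hs (fun h => pI h * K h h') = pJ h')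
  (HK3 : forall h h', In h hs -> In h' hs -> 0 < pI h -> 0 < K h h' -> h' <= h)
  (HCu : forall h1 h2, In h1 hs -> In h2 hs -> h1 <= h2 -> Cu h2 <= Cu h1)
  (Hal : (1 <= al <= Alh)%nat) (Har : (1 <= ar <= Arh)%nat) :
  sumL hs (fun h => pI h * sumL actions (fun w => piI hs K piJ al ar h w * cost Cs Cu w h)) <=
  sumL hs (fun h => pJ h * sumL actions (fun w => piJ al ar h w * cost Cs Cu w h)).
Proof.
  transitivity (sumL hs (fun h => sumL actions (fun w => sumL hs (fun h' =>
     pI h * K h h' * piJ al ar h' w * cost Cs Cu w h)))).
  { right. apply sumL_ext; intros h _. rewrite <- sumL_scal. apply sumL_ext; intros w _.
    unfold piI. rewrite <- sumL_scal_r, <- sumL_scal. apply sumL_ext; intros. ring. }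
  transitivity (sumL hs (fun h => sumL actions (fun w => sumL hs (fun h' =>
     pI h * K h h' * piJ al ar h' w * cost Cs Cu w h')))).
  { apply sumL_le; intros h Hh. apply sumL_le; intros w _. apply sumL_le; intros h' Hh'.
    assert (HpIh : 0 <= pI h) by (apply (proj1 HpI); auto).
    assert (HKh : 0 <= K h h') by auto.
    assert (Hpi : 0 <= piJ al ar h' w) by (apply (Hv al ar h'); auto).
    destruct HpIh as [HpIh|HpIh]; [destruct HKh as [HKh|HKh]|].
    - apply Rmult_le_compat_l; [apply Rmult_le_pos; [apply Rmult_le_pos|]; lra|].
      pose proof (HCu _ _ Hh' Hh (HK3 h h' Hh Hh' HpIh HKh)).
      unfold cost. destruct w as [s u]; destruct s; destruct u; simpl; lra.
    - rewrite <- HKh. right; ring.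
    - rewrite <- HpIh. right; ring. }
  right.
  transitivity (sumL hs (fun h => sumL hs (fun h' => sumL actions (fun w =>
     pI h * K h h' * piJ al ar h' w * cost Cs Cu w h')))).
  { apply sumL_ext; intros. apply sumL_swap. }
  rewrite sumL_swap. apply sumL_ext; intros h' Hh'. rewrite <- HK2 by auto.
  rewrite <- sumL_scal_r. apply sumL_ext; intros h Hh. rewrite <- sumL_scal. apply sumL_ext; intros. ring.
Qed.


Theorem theorem2
  (Alh Arh : nat) (hs : list R) (pI pJ : R -> R)
  (Cs : R) (Cu : R -> R) (Cmax : R) (a0l a0r : nat)
  (HAl : (1 <= Alh)%nat) (HAr : (1 <= Arh)%nat)
  (Hnd : NoDup hs) (Hpos : forall h, In h hs -> 0 < h)
  (HpI : is_pmf hs pI) (HpJ : is_pmf hs pJ)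
  (HCs : 0 <= Cs) (HCu : forall h, In h hs -> 0 <= Cu h)
  (HCmax : 0 < Cmax)
  (Ha0l : (1 <= a0l <= Alh)%nat) (Ha0r : (1 <= a0r <= Arh)%nat)
  (HCu_noninc : forall h1 h2, In h1 hs -> In h2 hs -> h1 <= h2 -> Cu h2 <= Cu h1)
  (Hfosd : forall f : R -> R,
      (forall h1 h2, In h1 hs -> In h2 hs -> h1 <= h2 -> f h1 <= f h2) ->
      expect hs pI f >= expect hs pJ f)
  (vI vJ : R)
  (HvI : is_glb (feasible_values Alh Arh hs pI Cs Cu Cmax a0l a0r) vI)
  (HvJ : is_glb (feasible_values Alh Arh hs pJ Cs Cu Cmax a0l a0r) vJ) :
  vI <= vJ.
Proof.
  destruct HvJ as [_ HvJlb]. apply HvJlb. intros a [piJ (Hv & HU & [c [Hc HcC]] & Ha)].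
  destruct (coupling (length hs) hs (le_n _) Hnd pI pJ) as [K (HK0 & HK1 & HK2 & HK3)].
  { apply (proj1 HpI). }
  { apply (proj1 HpJ). }
  { rewrite (proj2 HpI), (proj2 HpJ). reflexivity. }
  { intros t. specialize (Hfosd (fun h => if Rle_dec t h then 1 else 0)).
    unfold expect, rtail in *.
    rewrite (sumL_ext hs (fun h => if Rle_dec t h then pI h else 0) (fun h => pI h * (if Rle_dec t h then 1 else 0)))
      by (intros; destruct Rle_dec; ring).
    rewrite (sumL_ext hs (fun h => if Rle_dec t h then pJ h else 0) (fun h => pJ h * (if Rle_dec t h then 1 else 0)))
      by (intros; destruct Rle_dec; ring).
    apply Rge_le, Hfosd. intros h1 h2 _ _ H. destruct (Rle_dec t h1); destruct (Rle_dec t h2); lra. }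
  destruct HvI as [HvIlb _]. apply HvIlb.
  pose proof (valid_I _ _ _ _ _ Hv HK0 HK1) as HvI.
  assert (Hq : forall al ar w, qf hs pI (piI hs K piJ) al ar w = qf hs pJ piJ al ar w)
    by (intros; apply qf_eq; auto).
  assert (HqJ : forall al ar w, (1 <= al <= Alh)%nat -> (1 <= ar <= Arh)%nat -> 0 <= qf hs pJ piJ al ar w).
  { intros al ar w Hal Har. unfold qf. apply sumL_nonneg; intros h Hh.
    apply Rmult_le_pos; [apply (proj1 HpJ); auto|apply (Hv al ar h); auto]. }
  exists (piI hs K piJ). split; [exact HvI|]. split.
  { eapply unichain_transfer; eauto. }
  split.
  - destruct (limsup_le (cesaro (ECost Alh Arh hs pI (piI hs K piJ) a0l a0r Cs Cu))
                        (cesaro (ECost Alh Arh hs pJ piJ a0l a0r Cs Cu)) c) as [c' [Hc' Hc'c]]; auto.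
    + intros T. apply cesaro_nonneg. intros n. rewrite ECost_fact.
      apply sumL_nonneg; intros al Hal; apply sumL_nonneg; intros ar Har.
      apply in_seq in Hal, Har. apply Rmult_le_pos.
      * apply mu_nonneg. intros. rewrite Hq. apply HqJ; auto.
      * apply sumL_nonneg; intros h Hh. apply Rmult_le_pos; [apply (proj1 HpI); auto|].
        apply sumL_nonneg; intros w _. apply Rmult_le_pos; [apply (HvI al ar h); auto; lia|].
        pose proof (HCu h Hh). unfold cost. destruct w as [[|] [|]]; simpl; lra.
    + intros T. apply cesaro_le. intros n. rewrite !ECost_fact.
      apply sumL_le; intros al Hal; apply sumL_le; intros ar Har.
      apply in_seq in Hal, Har. rewrite (mu_ext _ _ _ _ _ _ _ _ _ Hq).
      apply Rmult_le_compat_l.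
      * apply mu_nonneg. intros. apply HqJ; auto.
      * eapply cost_le; eauto; lia.
    + exists c'. split; auto. lra.
  - apply (is_limsup_ext (cesaro (EAr Alh Arh hs pJ piJ a0l a0r))); auto.
    intros T. unfold cesaro. f_equal. apply sumL_ext; intros n _.
    rewrite !EAr_fact, (proj2 HpI), (proj2 HpJ). apply sumL_ext; intros; apply sumL_ext; intros.
    rewrite (mu_ext _ _ _ _ _ _ _ _ _ Hq). reflexivity.
Qed.
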